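(* Over the space of $n$-variate Fourier polynomials $f$ of degree at most $d$, \[\mathbb E f^4\preceq 9^d\,(\mathbb E f^2)^2,\] where the expectations are over the uniform distribution on $\{\pm1\}^n$.
   Context: An $n$-variate Fourier polynomial of degree at most $d$ is a function $f:\{\pm1\}^n\to\mathbb R$ of the form $f=\sum_{\alpha\subseteq[n],|\alpha|\le d}\hat f_\alpha\chi_\alpha$ with $\chi_\alpha(x)=\prod_{i\in\alpha}x_i$. Both $\mathbb E f^4$ and $(\mathbb E f^2)^2$ are viewed as polynomials in the real coefficients $\{\hat f_\alpha\}_{|\alpha|\le d}$, and $P\preceq Q$ means that $Q-P$ is a sum of squares of polynomials in these coefficients. *)

(* Defs.v *)
From HB Require Import structures.
From mathcomp Require Import all_boot all_order all_algebra.
From mathcomp Require Import reals.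
From mathcomp Require Import mpoly.
Set Implicit Arguments. Unset Strict Implicit. Unset Printing Implicit Defensive.
Import Order.TTheory GRing.Theory Num.Theory.
Local Open Scope ring_scope.

Definition lowsets (n d : nat) : {set {set 'I_n}} := [set a : {set 'I_n} | (#|a| <= d)%N].

(* Number of coefficient variables; variable i : 'I_(nvars n d) stands for
   \hat f_alpha with alpha = enum_val i, the i-th element of lowsets n d. *)
Definition nvars (n d : nat) : nat := #|lowsets n d|.

Definition cpoly (R : realType) (n d : nat) := {mpoly R[nvars n d]}.


(* A point x of {±1}^n, encoded as x : {ffun 'I_n -> bool} with x_i = (-1)^(x i). *)
Definition pm1 (R : realType) (b : bool) : R := if b then -1 else 1.

Definition chi (R : realType) (n : nat) (a : {set 'I_n}) (x : {ffun 'I_n -> bool}) : R :=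
  \prod_(i in a) pm1 R (x i).

Definition fourier_eval (R : realType) (n d : nat) (x : {ffun 'I_n -> bool}) : cpoly R n d :=
  \sum_(i < nvars n d) chi R (enum_val i) x *: 'X_i.

Definition Eunif (R : realType) (n d : nat) (g : {ffun 'I_n -> bool} -> cpoly R n d)
  : cpoly R n d :=
  (2%:R ^- n : R) *: \sum_(x : {ffun 'I_n -> bool}) g x.

Definition Ef4 (R : realType) (n d : nat) : cpoly R n d :=
  Eunif (fun x => fourier_eval R d x ^+ 4).
Definition Ef2 (R : realType) (n d : nat) : cpoly R n d :=
  Eunif (fun x => fourier_eval R d x ^+ 2).

Definition is_sos (R : realType) (k : nat) (p : {mpoly R[k]}) : Prop :=
  exists s : seq {mpoly R[k]}, p = \sum_(q <- s) q ^+ 2.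
Definition sos_le (R : realType) (k : nat) (p q : {mpoly R[k]}) : Prop :=
  is_sos (q - p).

(* Main.v *)
Require Import Defs.
From HB Require Import structures.
From mathcomp Require Import all_boot all_order all_algebra.
From mathcomp Require Import reals.
From mathcomp Require Import mpoly.
From mathcomp Require Import ring.
Set Implicit Arguments. Unset Strict Implicit. Unset Printing Implicit Defensive.
Import Order.TTheory GRing.Theory Num.Theory.
Local Open Scope ring_scope.
Section Gen.
Variable A : comRingType.

Definition sos (p : A) := exists s : seq A, p = \sum_(q <- s) q ^+ 2.
Definition sle (p q : A) := sos (q - p).

Lemma sos0 : sos 0. Proof. by exists [::]; rewrite big_nil. Qed.
Lemma sos_sq q : sos (q ^+ 2). Proof. by exists [:: q]; rewrite big_seq1. Qed.
Lemma sosD p q : sos p -> sos q -> sos (p + q).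
Proof. by move=> [s ->] [t ->]; exists (s ++ t); rewrite big_cat. Qed.
Lemma sosM p q : sos p -> sos q -> sos (p * q).
Proof.
move=> [s ->] [t ->]; exists [seq x * y | x <- s, y <- t].
rewrite big_allpairs_dep mulr_suml; apply: eq_bigr => x _.
rewrite mulr_sumr; apply: eq_bigr => y _; by rewrite exprMn.
Qed.
Lemma sos_nat m : sos (m%:R).
Proof.
elim: m => [|m IH]; first exact: sos0.
by rewrite -addn1 natrD; apply: sosD => //; rewrite -(expr1n A 2); apply: sos_sq.
Qed.
Lemma sos_natM m p : sos p -> sos (m%:R * p).
Proof. by move=> h; apply: sosM => //; apply: sos_nat. Qed.
Lemma sle_trans p q r : sle p q -> sle q r -> sle p r.
Proof. move=> h1 h2; have := sosD h1 h2; by rewrite /sle addrC addrA subrK. Qed.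
Lemma sleD p q p' q' : sle p q -> sle p' q' -> sle (p + p') (q + q').
Proof. move=> h1 h2; have := sosD h1 h2; rewrite /sle; congr sos; ring. Qed.
Lemma sle_eq p q p' q' : p = p' -> q = q' -> sle p q -> sle p' q'.
Proof. by move=> -> ->. Qed.
Lemma sle_natM m p q : sle p q -> sle (m%:R * p) (m%:R * q).
Proof. move=> h; have := sos_natM m h; rewrite /sle; congr sos; ring. Qed.

Lemma bound_scale m c C X P : sle X (c%:R * P) -> sos P -> (m * c <= C)%N ->
  sle (m%:R * X) (C%:R * P).
Proof.
move=> h hP hc; have := sosD (sos_natM m h) (sos_natM (C - m * c) hP).
rewrite /sle natrB // natrM; congr sos; ring.
Qed.

Definition pmA (b : bool) : A := if b then -1 else 1.

Fixpoint enumseq (k : nat) : seq (seq bool) :=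
  if k is k'.+1 then [seq true :: s | s <- enumseq k'] ++ [seq false :: s | s <- enumseq k']
  else [:: [::]].

Definition S k (h : seq bool -> A) := \sum_(s <- enumseq k) h s.

Lemma S0 h : S 0 h = h [::]. Proof. by rewrite /S big_seq1. Qed.
Lemma SS k h : S k.+1 h = S k (fun s => h (true :: s)) + S k (fun s => h (false :: s)).
Proof. by rewrite /S /= big_cat !big_map. Qed.
Lemma S_ext k h1 h2 : (forall s, h1 s = h2 s) -> S k h1 = S k h2.
Proof. by move=> e; apply: eq_bigr. Qed.
Lemma S_add k h1 h2 : S k (fun s => h1 s + h2 s) = S k h1 + S k h2.
Proof. by rewrite /S big_split. Qed.
Lemma S_mul k c h : S k (fun s => c * h s) = c * S k h.
Proof. by rewrite /S mulr_sumr. Qed.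
Lemma S_sos k h : (forall s, sos (h s)) -> sos (S k h).
Proof. move=> H; rewrite /S; elim: (enumseq k) => [|x r IH]; rewrite ?big_nil ?big_cons; [exact: sos0|exact: sosD]. Qed.
Lemma S_sle k h1 h2 : (forall s, sle (h1 s) (h2 s)) -> sle (S k h1) (S k h2).
Proof. move=> H; rewrite /sle /S -sumrB; exact: S_sos. Qed.
Lemma S_zero k h : (forall s, h s = 0) -> S k h = 0.
Proof. by move=> H; rewrite /S big1. Qed.

Fixpoint lowdeg (k d : nat) (F : seq bool -> A) : Prop :=
  if k is k'.+1 then exists F0 F1 : seq bool -> A,
     [/\ lowdeg k' d F0,
         (if d is d'.+1 then lowdeg k' d' F1 else forall s, F1 s = 0)
       & forall b s, F (b :: s) = F0 s + pmA b * F1 s]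
  else True.

Definition lowdegm k d F := if d is d'.+1 then lowdeg k d' F else forall s : seq bool, F s = 0.

Definition LHS k F G := 2 ^+ k * S k (fun s => F s ^+ 2 * G s ^+ 2).
Definition P2 k F G := S k (fun s => F s ^+ 2) * S k (fun s => G s ^+ 2).

Lemma sosP2 k F G : sos (P2 k F G).
Proof. apply: sosM; apply: S_sos => s; exact: sos_sq. Qed.

Lemma zero_case k F G m C : ((forall s, F s = 0) \/ (forall s, G s = 0)) ->
  sle (m%:R * LHS k F G) (C%:R * P2 k F G).
Proof.
move=> H; rewrite /LHS S_zero ?mulr0 ?mulr0.
  by rewrite /sle subr0; apply: sos_natM; apply: sosP2.
by move=> s; case: H => ->; rewrite ?expr0n ?mul0r ?mulr0.
Qed.

Theorem main k : forall d1 d2 F G, lowdeg k d1 F -> lowdeg k d2 G ->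
  sle (LHS k F G) ((3 ^ (d1 + d2))%:R * P2 k F G).
Proof.
elim: k => [|k IH] d1 d2 F G hF hG.
  rewrite /LHS /P2 !S0 expr0 mul1r.
  have := sos_natM (3 ^ (d1 + d2) - 1) (sos_sq (F [::] * G [::])).
  rewrite /sle natrB ?expn_gt0 //; congr sos; ring.
case: hF => F0 [F1 [hF0 hF1 eF]]; case: hG => G0 [G1 [hG0 hG1 eG]].
have T2 : sle (1%:R * LHS k F1 G1) ((3 ^ (d1 + d2))%N%:R * P2 k F1 G1).
  case: d1 hF0 hF1 => [|d1] hF0 hF1; first by apply: zero_case; left.
  case: d2 hG0 hG1 => [|d2] hG0 hG1; first by apply: zero_case; right.
  apply: (bound_scale (c := 3 ^ (d1 + d2))); [exact: IH | exact: sosP2|].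
  by rewrite mul1n leq_exp2l // addnS addSn leqW.
have T3 : sle (3%:R * LHS k F0 G1) ((3 ^ (d1 + d2))%N%:R * P2 k F0 G1).
  clear T2; case: d2 hG0 hG1 => [|d2] hG0 hG1; first by apply: zero_case; right.
  apply: (bound_scale (c := 3 ^ (d1 + d2))); [exact: IH | exact: sosP2|].
  by rewrite addnS expnS.
have T4 : sle (3%:R * LHS k F1 G0) ((3 ^ (d1 + d2))%N%:R * P2 k F1 G0).
  clear T2 T3; case: d1 hF0 hF1 => [|d1] hF0 hF1; first by apply: zero_case; left.
  apply: (bound_scale (c := 3 ^ (d1 + d2))); [exact: IH | exact: sosP2|].
  by rewrite addSn expnS.
have T1 : sle (1%:R * LHS k F0 G0) ((3 ^ (d1 + d2))%N%:R * P2 k F0 G0).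
  by rewrite mul1r; apply: IH.
have T := sleD (sleD (sleD T1 T2) T3) T4.
pose Q s := (F0 s * G0 s + F1 s * G1 s) ^+ 2 + (F0 s * G1 s + F1 s * G0 s) ^+ 2.
pose U s := F0 s ^+ 2 * G0 s ^+ 2 + F1 s ^+ 2 * G1 s ^+ 2 + 3%:R * (F0 s ^+ 2 * G1 s ^+ 2)
   + 3%:R * (F1 s ^+ 2 * G0 s ^+ 2).
have QU : sle (2 ^+ k * S k Q) (2 ^+ k * S k U).
  have := sle_natM (2 ^ k) (@S_sle k Q U _).
  rewrite natrX; apply; move=> s.
  have := sos_natM 2 (sos_sq (F0 s * G1 s - F1 s * G0 s)).
  rewrite /sle /Q /U; congr sos; ring.
have eL : LHS k.+1 F G = 4%:R * (2 ^+ k * S k Q).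
  rewrite /LHS SS -S_add (@S_ext k _ (fun s => 2%:R * Q s)) ?S_mul; first by rewrite exprS; ring.
  move=> s; rewrite !eF !eG /pmA /Q; ring.
have eU : 2 ^+ k * S k U = 1%:R * LHS k F0 G0 + 1%:R * LHS k F1 G1
    + 3%:R * LHS k F0 G1 + 3%:R * LHS k F1 G0.
  rewrite /U /LHS !S_add !S_mul; ring.
have eR : P2 k.+1 F G = 4%:R * (P2 k F0 G0 + P2 k F1 G1 + P2 k F0 G1 + P2 k F1 G0).
  rewrite /P2 !SS.
  have -> : S k (fun s => F (true :: s) ^+ 2) + S k (fun s => F (false :: s) ^+ 2)
     = 2%:R * (S k (fun s => F0 s ^+ 2) + S k (fun s => F1 s ^+ 2)).
    rewrite -!S_add -S_mul; apply: S_ext => s; rewrite !eF /pmA; ring.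
  have -> : S k (fun s => G (true :: s) ^+ 2) + S k (fun s => G (false :: s) ^+ 2)
     = 2%:R * (S k (fun s => G0 s ^+ 2) + S k (fun s => G1 s ^+ 2)).
    rewrite -!S_add -S_mul; apply: S_ext => s; rewrite !eG /pmA; ring.
  ring.
rewrite eL eR; have := sle_natM 4 (sle_trans QU (sle_eq (esym eU) (erefl _) T)).
apply: sle_eq => //; ring.
Qed.
End Gen.
Section Terms.
Variable A : comRingType.

Lemma prod_cons (L : seq nat) b s : uniq L ->
  \prod_(j <- L) pmA A (nth false (b :: s) j) =
  (if 0%N \in L then pmA A b else 1) * \prod_(j <- map predn (rem 0%N L)) pmA A (nth false s j).
Proof.
move=> uL; rewrite big_map; case: ifP => h0.
  rewrite (perm_big _ (perm_to_rem h0)) big_cons /=; congr (_ * _).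
  apply: eq_big_seq => j; rewrite mem_rem_uniq // inE => /andP[jn0 _].
  by case: j jn0.
rewrite mul1r rem_id ?h0 //; apply: eq_big_seq => j jL.
by case: j jL => [|j] jL //; rewrite jL in h0.
Qed.

Lemma lowdeg_terms k : forall d (I : Type) (r : seq I) (P : pred I) (c : I -> A)
  (L : I -> seq nat),
  (forall i, P i -> uniq (L i) && (size (L i) <= d)%N) ->
  lowdeg k d (fun s => \sum_(i <- r | P i) c i * \prod_(j <- L i) pmA A (nth false s j)).
Proof.
elim: k => [//|k IH] d I r P c L H.
pose L' i := map predn (rem 0%N (L i)).
have uL' i : P i -> uniq (L' i).
  move=> Pi; have /andP[u _] := H i Pi; rewrite map_inj_in_uniq ?rem_uniq //.
  move=> x y; rewrite !mem_rem_uniq // !inE => /andP[x0 _] /andP[y0 _].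
  by case: x x0 => // x _; case: y y0 => // y _ /= ->.
exists (fun s => \sum_(i <- r | P i && (0%N \notin L i)) c i * \prod_(j <- L' i) pmA A (nth false s j)).
exists (fun s => \sum_(i <- r | P i && (0%N \in L i)) c i * \prod_(j <- L' i) pmA A (nth false s j)).
split.
- apply: IH => i /andP[Pi h0]; rewrite uL' //= /L' size_map rem_id //.
  by have /andP[_ ->] := H i Pi.
- case: d H => [|d] H.
    move=> s; rewrite big1 // => i /andP[Pi h0].
    by have /andP[_] := H i Pi; rewrite leqn0 size_eq0 => /eqP e; rewrite e in h0.
  apply: IH => i /andP[Pi h0]; rewrite uL' //= /L' size_map size_rem //.
  by have /andP[_] := H i Pi; case: (size (L i)).
- move=> b s; rewrite (bigID (fun i => 0%N \in L i)) /= addrC mulr_sumr; congr (_ + _).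
    apply: eq_bigr => i /andP[Pi h0]; rewrite prod_cons; last by have /andP[] := H i Pi.
    by rewrite (negbTE h0) mul1r.
  apply: eq_bigr => i /andP[Pi h0]; rewrite prod_cons; last by have /andP[] := H i Pi.
  by rewrite h0 /L'; ring.
Qed.
End Terms.
Definition tofun n (s : seq bool) : {ffun 'I_n -> bool} := [ffun i : 'I_n => nth false s i].

Lemma mem_cons_map (b c : bool) (s : seq bool) (E : seq (seq bool)) :
  (b :: s \in [seq c :: t | t <- E]) = (b == c) && (s \in E).
Proof.
apply/mapP/andP => [[t ht [-> ->]]|[/eqP -> hs]] //; by exists s.
Qed.

Lemma enumseq_size k s : (s \in enumseq k) = (size s == k).
Proof.
elim: k s => [|k IH] [|b s] //=; rewrite ?mem_cat.
- by apply/negbTE/norP; split; apply/mapP => -[].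
- by rewrite !mem_cons_map eqSS -IH; case: b => /=; rewrite ?orbF.
Qed.

Lemma enumseq_uniq k : uniq (enumseq k).
Proof.
elim: k => [//|k IH] /=; rewrite cat_uniq !map_inj_uniq //; last 2 first.
- by move=> x y [].
- by move=> x y [].
rewrite IH andbT; apply/hasPn => x /mapP[t _ ->]; by rewrite mem_cons_map.
Qed.

Lemma sum_ffun (V : nmodType) n (h : {ffun 'I_n -> bool} -> V) :
  \sum_x h x = \sum_(s <- enumseq n) h (tofun n s).
Proof.
rewrite -(big_map (tofun n) xpredT); apply: perm_big.
apply: uniq_perm; first exact: index_enum_uniq.
  rewrite map_inj_in_uniq ?enumseq_uniq // => s t.
  rewrite !enumseq_size => /eqP hs /eqP ht e.
  apply: (@eq_from_nth _ false); first by rewrite hs ht.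
  move=> i hi; rewrite hs in hi.
  by have := congr1 (fun f : {ffun 'I_n -> bool} => f (Ordinal hi)) e; rewrite !ffunE.
move=> x; rewrite mem_index_enum; symmetry; apply/mapP.
exists [seq x i | i <- enum 'I_n].
  by rewrite enumseq_size size_map size_enum_ord.
apply/ffunP => i; rewrite ffunE (nth_map i) ?size_enum_ord //.
by rewrite nth_ord_enum.
Qed.

Lemma four_terms (R : realType) n d s :
  fourier_eval R d (tofun n s) = \sum_(i <- index_enum 'I_(nvars n d) | xpredT i)
     'X_i * \prod_(j <- [seq val j | j <- enum (enum_val i)]) pmA _ (nth false s j).
Proof.
rewrite /fourier_eval; apply: eq_bigr => i _.
rewrite -mulr_algr; congr (_ * _); rewrite /chi big_map big_enum /=.
apply: (big_ind2 (fun x y => x%:A = y)).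
- by rewrite scale1r.
- by move=> x1 x2 y1 y2 <- <-; rewrite -scalerA -mulr_algl.
move=> j _; rewrite ffunE /pm1 /pmA /=; case: (nth _ _ _); rewrite ?scaleN1r ?scale1r //.
Qed.

Lemma four_lowdeg (R : realType) n d :
  lowdeg n d (fun s => fourier_eval R d (tofun n s)).
Proof.
have H : forall F G : seq bool -> cpoly R n d, (forall s, F s = G s) ->
   lowdeg n d F -> lowdeg n d G.
  by case: n => [//|k] F G e /=[F0 [F1 [h0 h1 h2]]]; exists F0, F1; split => // b s; rewrite -e.
apply: H; first by move=> s; rewrite four_terms.
apply: lowdeg_terms => i _.
rewrite map_inj_uniq ?enum_uniq //=; last exact: val_inj.
rewrite size_map -cardE.
by have := enum_valP i; rewrite inE.
Qed.

Unset Implicit Arguments.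
Theorem lemma5p1 (R : realType) (n d : nat) :
  sos_le (Ef4 R n d) ((9 ^ d)%N%:R *: (Ef2 R n d ^+ 2)).
Proof.
pose F := fun s => fourier_eval R d (tofun n s).
have M := main (four_lowdeg R n d) (four_lowdeg R n d).
rewrite /sos_le /Ef4 /Ef2 /Eunif !sum_ffun.
rewrite /LHS /P2 /S in M.
set X := \sum_(s <- enumseq n) fourier_eval R d (tofun n s) ^+ 2 in M *.
set Y := \sum_(s <- enumseq n) fourier_eval R d (tofun n s) ^+ 4.
have eY : \sum_(s <- enumseq n) F s ^+ 2 * F s ^+ 2 = Y.
  by apply: eq_bigr => s _; rewrite -exprD.
rewrite eY in M.
have e9 : (3 ^ (d + d))%N = (9 ^ d)%N by rewrite addnn -mul2n expnM.
rewrite e9 in M.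
set c : R := 2%:R ^- n.
have c2 : c ^+ 2 * (2 ^ n)%:R = c.
  rewrite expr2 -mulrA natrX /c mulVf ?mulr1 // expf_neq0 // pnatr_eq0.
  by [].
have E : (9 ^ d)%N%:R *: (c *: X) ^+ 2 - c *: Y =
    c ^+ 2 *: ((9 ^ d)%N%:R * (X * X) - 2 ^+ n * Y).
  rewrite exprZn -natrX !mulr_natl -!scaler_nat scalerBr !scalerA.
  by rewrite c2 mulrC expr2.
rewrite E; case: M => q eq; rewrite eq.
exists [seq c *: x | x <- q]; rewrite big_map scaler_sumr; apply: eq_bigr => x _.
by rewrite exprZn.
Qed.
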